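(* Suppose $s_0,\dots,s_7\in\sum\mathbb{R}(x,y,z)^2$ satisfy $$s_0\,xy+s_1\,z=s_2+s_3\,x+s_4\,y+s_5\,xz+s_6\,yz+s_7\,xyz.$$ Then $s_i=0$ for all $i=0,\dots,7$.
   Context: $\mathbb{R}(x,y,z)$ is the field of rational functions in three real variables and $\sum\mathbb{R}(x,y,z)^2$ is the set of finite sums of squares of its elements. *)

(* Defs.v *)
From HB Require Import structures.
From mathcomp Require Import all_boot all_order all_algebra fraction.
Set Implicit Arguments. Unset Strict Implicit. Unset Printing Implicit Defensive.
Import Order.TTheory GRing.Theory Num.Theory.
Local Open Scope ring_scope.

Definition RX (R : rcfType) : fieldType := {fraction {poly R}}.
Definition RXY (R : rcfType) : fieldType := {fraction {poly RX R}}.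
Definition RXYZ (R : rcfType) : fieldType := {fraction {poly RXY R}}.

Definition varX1 (R : rcfType) : RX R := FracField.tofrac 'X.
Definition varX2 (R : rcfType) : RXY R := FracField.tofrac (varX1 R)%:P.
Definition varY2 (R : rcfType) : RXY R := FracField.tofrac 'X.

Definition varX (R : rcfType) : RXYZ R := FracField.tofrac (varX2 R)%:P.
Definition varY (R : rcfType) : RXYZ R := FracField.tofrac (varY2 R)%:P.
Definition varZ (R : rcfType) : RXYZ R := FracField.tofrac 'X.

Definition is_sos (K : fieldType) (f : K) : Prop :=
  exists s : seq K, f = \sum_(g <- s) g ^+ 2.

(* Main.v *)
Require Import Defs.
From HB Require Import structures.
From mathcomp Require Import all_boot all_order all_algebra fraction generic_quotient.
Import GRing.Theory Num.Theory.
Set Implicit Arguments. Unset Strict Implicit.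
Local Open Scope ring_scope.

Definition sos (R : comNzRingType) (s : seq R) := \sum_(g <- s) g ^+ 2.
Definition wsum (R : comNzRingType) (cs : seq R) (ss : seq (seq R)) :=
  \sum_(x <- zip cs ss) x.1 * sos x.2.
Definition zero2 (R : comNzRingType) (ss : seq (seq R)) :=
  all (all (fun g => g == 0)) ss.
Definition aniso (R : comNzRingType) (cs : seq R) :=
  forall ss, size ss = size cs -> wsum cs ss = 0 -> zero2 ss.

Section Gen.
Variable R : comNzRingType.
Implicit Types (cs : seq R) (ss : seq (seq R)).

Lemma wsum_cons c cs s ss : wsum (c :: cs) (s :: ss) = c * sos s + wsum cs ss.
Proof. by rewrite /wsum /= big_cons. Qed.

Lemma wsum0l ss : wsum [::] ss = 0.
Proof. by case: ss => [|s ss]; rewrite /wsum /= big_nil. Qed.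
Lemma wsum0r cs : wsum cs [::] = 0.
Proof. by case: cs => [|c cs]; rewrite /wsum /= big_nil. Qed.

Lemma wsum_cat cs1 cs2 ss1 ss2 : size ss1 = size cs1 ->
  wsum (cs1 ++ cs2) (ss1 ++ ss2) = wsum cs1 ss1 + wsum cs2 ss2.
Proof. by move=> h; rewrite /wsum zip_cat // big_cat. Qed.

Lemma wsum_mapl a cs ss : wsum (map (fun c => a * c) cs) ss = a * wsum cs ss.
Proof.
elim: cs ss => [|c cs IH] [|s ss]; rewrite /= ?wsum0l ?wsum0r ?mulr0 //.
by rewrite !wsum_cons IH mulrDr mulrA.
Qed.

Lemma sos_mapr a (s : seq R) : sos (map (fun g => g * a) s) = a ^+ 2 * sos s.
Proof.
by rewrite /sos big_map mulr_sumr; apply: eq_bigr => g _; rewrite exprMn mulrC.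
Qed.

Lemma wsum_mapr a cs ss :
  wsum cs (map (map (fun g => g * a)) ss) = a ^+ 2 * wsum cs ss.
Proof.
elim: cs ss => [|c cs IH] [|s ss]; rewrite /= ?wsum0l ?wsum0r ?mulr0 //.
by rewrite !wsum_cons IH sos_mapr mulrDr mulrCA.
Qed.

Lemma zero2_map (S : comNzRingType) (f : R -> S) ss :
  zero2 (map (map f) ss) = all (all (fun g => f g == 0)) ss.
Proof. by rewrite /zero2 all_map; apply: eq_all => s /=; rewrite all_map. Qed.

End Gen.

Lemma wsum_rmorph (R S : comNzRingType) (f : {rmorphism R -> S}) cs ss :
  f (wsum cs ss) = wsum (map f cs) (map (map f) ss).
Proof.
elim: cs ss => [|c cs IH] [|s ss]; rewrite /= ?wsum0l ?wsum0r ?rmorph0 //.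
rewrite !wsum_cons rmorphD rmorphM IH; congr (_ * _ + _).
by rewrite /sos rmorph_sum big_map; apply: eq_bigr => g _; rewrite rmorphXn.
Qed.

Lemma bound1 (T : Type) (f : T -> nat) (s : seq T) : exists n, all (fun x => (f x <= n)%N) s.
Proof.
elim: s => [|x s [n hn]]; first by exists 0.
exists (maxn (f x) n); rewrite /= leq_maxl /=.
by apply: sub_all hn => y hy; exact: leq_trans hy (leq_maxr _ _).
Qed.

Lemma bound2 (T : Type) (f : T -> nat) (s : seq (seq T)) :
  exists n, all (all (fun x => (f x <= n)%N)) s.
Proof.
elim: s => [|x s [n hn]]; first by exists 0.
have [m hm] := bound1 f x.
exists (maxn m n); rewrite /=; apply/andP; split.
  by apply: sub_all hm => y hy; exact: leq_trans hy (leq_maxl _ _).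
apply: sub_all hn => t; apply: sub_all => y hy; exact: leq_trans hy (leq_maxr _ _).
Qed.

Section PolyK.
Variable K : fieldType.

Lemma root_step (A : seq K) (ss : seq (seq {poly K})) (V : {poly K}) :
  aniso A -> size ss = size A ->
  wsum (map polyC A) ss + 'X * V = 0 ->
  map (map (fun q => q * 'X)) (map (map (fun p => p %/ 'X)) ss) = ss.
Proof.
move=> hA hs e.
have := congr1 (horner_eval 0) e.
rewrite rmorphD rmorphM rmorph0 /= wsum_rmorph horner_evalE hornerX mul0r addr0.
rewrite (_ : [seq _ | i <- [seq i%:P | i <- A]] = A); last by elim: (A) => //= a l ->; rewrite hornerC.
move=> /hA; rewrite size_map => /(_ hs); rewrite zero2_map => hz.
rewrite -map_comp; apply: map_id_in => s hsin /=.
rewrite -map_comp; apply: map_id_in => p hpin /=.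
have := allP hz s hsin => /allP /(_ p hpin); move=> /eqP h0.
apply: divpK; rewrite -[X in X %| _]subr0 -polyC0 dvdp_XsubCl; exact/eqP.
Qed.

Lemma Xcancel (a b : {poly K}) : 'X ^+ 2 * a + 'X * b = 0 -> b + 'X * a = 0.
Proof.
move=> e; have : 'X * (b + 'X * a) = 0 by rewrite mulrDr mulrA -expr2 addrC.
by move/eqP; rewrite mulf_eq0 polyX_eq0 /= => /eqP.
Qed.

Lemma poly_main (A B : seq K) : aniso A -> aniso B -> forall n
  (ss1 ss2 : seq (seq {poly K})), size ss1 = size A -> size ss2 = size B ->
  all (all (fun p : {poly K} => (size p <= n)%N)) (ss1 ++ ss2) ->
  wsum (map polyC A) ss1 + 'X * wsum (map polyC B) ss2 = 0 ->
  zero2 ss1 /\ zero2 ss2.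
Proof.
move=> hA hB n; elim: n => [|n IH] ss1 ss2 s1 s2 hb e.
  have hz : zero2 (ss1 ++ ss2).
    apply: sub_all hb => s; apply: sub_all => p; rewrite leqn0 size_poly_eq0 //.
  by move: hz; rewrite /zero2 all_cat => /andP.
have e1 := root_step hA s1 e.
rewrite -e1 wsum_mapr in e; move/Xcancel: e => e.
have e2 := root_step hB s2 e.
rewrite -e2 wsum_mapr in e; move/Xcancel: e => e.
have [|||z1 z2] := IH _ _ _ _ _ e; rewrite ?size_map //.
  rewrite -map_cat all_map; apply: sub_all hb => s; rewrite /= all_map.
  apply: sub_all => p /=; rewrite size_divp ?polyX_eq0 // size_polyX /= => h.
  by rewrite leq_subLR add1n.
rewrite -e1 -e2 !zero2_map; split.
  by apply: sub_all z1 => s; apply: sub_all => p /eqP ->; rewrite mul0r.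
by apply: sub_all z2 => s; apply: sub_all => p /eqP ->; rewrite mul0r.
Qed.

End PolyK.

Lemma frac_repr (R: idomainType) (x : {fraction R}) :
  exists n d, d != 0 /\ x * FracField.tofrac d = FracField.tofrac n.
Proof.
elim/quotW: x => r.
exists (\n_r), (\d_r); split; first exact: denom_ratioP.
unlock FracField.tofrac.
rewrite -[_ * _]/(FracField.mul _ _).
rewrite !piE.
apply/eqmodP; rewrite /= FracField.equivfE /FracField.mulf.
have h := denom_ratioP r.
rewrite !numden_Ratio ?oner_neq0 ?mulf_neq0 ?oner_neq0 //.
by rewrite !mulr1 mulrC.
Qed.

Section Frac.
Variable R : idomainType.
Local Notation tf := (@FracField.tofrac R).

Lemma denom1 (s : seq {fraction R}) : exists D, D != 0 /\
  exists ps, map (fun g => g * tf D) s = map tf ps.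
Proof.
elim: s => [|g s [D [hD [ps hps]]]]; first by exists 1; split; [exact: oner_neq0| exists [::]].
have [p [q [hq hg]]] := frac_repr g.
exists (D * q); split; first by rewrite mulf_neq0.
exists (p * D :: map (fun r => r * q) ps) => /=; congr (_ :: _).
  by rewrite !rmorphM mulrCA hg mulrC.
transitivity [seq x * tf q | x <- [seq g * tf D | g <- s]].
  by rewrite -map_comp; apply: eq_map => x /=; rewrite rmorphM mulrA.
by rewrite hps -!map_comp; apply: eq_map => r /=; rewrite rmorphM.
Qed.

Lemma denom2 (ss : seq (seq {fraction R})) : exists D, D != 0 /\
  exists pss, map (map (fun g => g * tf D)) ss = map (map tf) pss.
Proof.
elim: ss => [|s ss [D2 [hD2 [pss hpss]]]]; first by exists 1; split; [exact: oner_neq0| exists [::]].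
have [D1 [hD1 [ps hps]]] := denom1 s.
exists (D1 * D2); split; first by rewrite mulf_neq0.
exists (map (fun r => r * D2) ps :: map (map (fun r => r * D1)) pss) => /=.
congr (_ :: _).
  transitivity [seq x * tf D2 | x <- [seq g * tf D1 | g <- s]].
    by rewrite -map_comp; apply: eq_map => x /=; rewrite rmorphM mulrA.
  by rewrite hps -!map_comp; apply: eq_map => r /=; rewrite rmorphM.
transitivity [seq [seq x * tf D1 | x <- t] | t <- [seq [seq g * tf D2 | g <- u] | u <- ss]].
  rewrite -map_comp; apply: eq_map => u /=; rewrite -map_comp; apply: eq_map => x /=.
  by rewrite rmorphM [tf D1 * _]mulrC mulrA.
rewrite hpss -!map_comp; apply: eq_map => u /=; rewrite -!map_comp.
by apply: eq_map => r /=; rewrite rmorphM.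
Qed.

End Frac.

Lemma aniso_frac (K : fieldType) (A B : seq K) : aniso A -> aniso B ->
  aniso (map (fun c => FracField.tofrac c%:P) A ++
         map (fun c => FracField.tofrac 'X * FracField.tofrac c%:P) B :
         seq {fraction {poly K}}).
Proof.
move=> hA hB ss; rewrite size_cat !size_map => hs hw.
have [D [hD [pss hp]]] := denom2 ss.
have hsz : size pss = size ss by rewrite -(size_map (map (@FracField.tofrac _))) -hp size_map.
have hw' : wsum (map (fun c => FracField.tofrac c%:P) A ++
         map (fun c => FracField.tofrac 'X * FracField.tofrac c%:P) B)
         (map (map (fun g => g * FracField.tofrac D)) ss) = 0.
  by rewrite wsum_mapr hw mulr0.
rewrite hp -(cat_take_drop (size A) pss) map_cat wsum_cat in hw'; last first.
  by rewrite !size_map size_takel // hsz hs leq_addr.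
have eA : map (fun c : K => FracField.tofrac c%:P) A =
    map (@FracField.tofrac _) (map polyC A) by rewrite -map_comp.
have eB : map (fun c : K => FracField.tofrac 'X * FracField.tofrac c%:P) B =
    map (fun x => FracField.tofrac 'X * x) (map (@FracField.tofrac _) (map polyC B)).
  by rewrite -!map_comp.
rewrite eA eB wsum_mapl -!wsum_rmorph -rmorphM -rmorphD in hw'.
move/eqP: hw'; rewrite tofrac_eq0 => /eqP hw'.
have [n hn] := bound2 (fun p : {poly K} => size p) pss.
have [] := poly_main hA hB (n := n) _ _ _ hw'.
- by rewrite size_takel // hsz hs leq_addr.
- by rewrite size_drop hsz hs addKn.
- by rewrite cat_take_drop.
move=> z1 z2.
have : zero2 (map (map (@FracField.tofrac _)) pss).
  by rewrite -(cat_take_drop (size A) pss) map_cat /zero2 all_cat -!/(zero2 _) !zero2_map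
    -!zero2_map !zero2_map; apply/andP; split;
    [apply: sub_all z1|apply: sub_all z2] => s; apply: sub_all => p /eqP ->; rewrite rmorph0.
rewrite -hp zero2_map => hz; apply: sub_all hz => s; apply: sub_all => g.
by rewrite mulf_eq0 tofrac_eq0 (negbTE hD) orbF.
Qed.

Lemma ac8 (V : zmodType) (t0 t1 t2 t3 t4 t5 t6 t7 : V) :
  t0 + t1 = t2 + t3 + t4 + t5 + t6 + t7 ->
  -t2 + (-t3 + (-t4 + (t0 + (t1 + (-t5 + (-t6 + -t7)))))) = 0.
Proof.
move=> E.
pose g := nth 0 [:: t0; t1; -t2; -t3; -t4; -t5; -t6; -t7].
have -> : -t2 + (-t3 + (-t4 + (t0 + (t1 + (-t5 + (-t6 + -t7)))))) =
    \sum_(i <- [:: 2;3;4;0;1;5;6;7]%N) g i.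
  by rewrite !big_cons big_nil addr0.
rewrite (perm_big (iota 0 8)) //.
rewrite /= !big_cons big_nil /= addr0 addrA E.
by apply/eqP; rewrite addr_eq0 -!opprD opprK -!addrA.
Qed.

Lemma general (R0 R1 R2 R3 : comNzRingType) (f1 : R0 -> R1) (f2 : R1 -> R2)
  (f3 : R2 -> R3) (x1 : R1) (y2 : R2) (x y z s0 s1 s2 s3 s4 s5 s6 s7 : R3) :
  f1 (-1) = -1 -> f1 1 = 1 -> f2 (-1) = -1 -> f2 1 = 1 -> f3 (-1) = -1 -> f3 1 = 1 ->
  (forall a b, f2 (a * b) = f2 a * f2 b) -> (forall a b, f3 (a * b) = f3 a * f3 b) ->
  f3 (f2 x1) = x -> f3 y2 = y ->
  s0 * (x * y) + s1 * z = s2 + s3 * x + s4 * y + s5 * (x * z) + s6 * (y * z) + s7 * (x * y * z) ->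
  f3 (f2 (f1 (-1))) * s2 + (f3 (f2 (x1 * f1 (-1))) * s3 + (f3 (y2 * f2 (f1 (-1))) * s4 +
  (f3 (y2 * f2 (x1 * f1 1)) * s0 + (z * f3 (f2 (f1 1)) * s1 +
  (z * f3 (f2 (x1 * f1 (-1))) * s5 + (z * f3 (y2 * f2 (f1 (-1))) * s6 +
  (z * f3 (y2 * f2 (x1 * f1 (-1))) * s7 + 0))))))) = 0.
Proof.
move=> h1n h11 h2n h21 h3n h31 h2m h3m hx hy E.
rewrite addr0 -(ac8 E).
congr (_ + (_ + (_ + (_ + (_ + (_ + (_ + _))))))).
- by rewrite h1n h2n h3n mulN1r.
- by rewrite h1n h2m h3m h2n h3n hx mulrN1 mulNr mulrC.
- by rewrite h1n h2n h3m h3n hy mulrN1 mulNr mulrC.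
- by rewrite h11 h2m h21 mulr1 !h3m hx hy mulrC (mulrC y).
- by rewrite h11 h21 h31 mulr1 mulrC.
- rewrite h1n h2m h3m h2n h3n hx mulrN1 mulrN mulNr; congr (- _).
  by rewrite mulrC (mulrC z).
- rewrite h1n h2n h3m h3n hy mulrN1 mulrN mulNr; congr (- _).
  by rewrite mulrC (mulrC z).
- rewrite h1n h2m h2n !h3m h3n hx hy mulrN1 !mulrN mulNr; congr (- _).
  by rewrite mulrC; congr (_ * _); rewrite mulrC (mulrC y).
Qed.

Definition e1 (R : rcfType) (c : R) : RX R := FracField.tofrac c%:P.
Definition e2 (R : rcfType) (c : RX R) : RXY R := FracField.tofrac c%:P.
Definition e3 (R : rcfType) (c : RXY R) : RXYZ R := FracField.tofrac c%:P.

Lemma aniso_X (R : rcfType) (A B : seq R) : aniso A -> aniso B ->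
  aniso (R := RX R) (map (@e1 R) A ++ map (fun c => varX1 R * e1 c) B).
Proof. exact: aniso_frac. Qed.
Lemma aniso_Y (R : rcfType) (A B : seq (RX R)) : aniso A -> aniso B ->
  aniso (R := RXY R) (map (@e2 R) A ++ map (fun c => varY2 R * e2 c) B).
Proof. exact: aniso_frac. Qed.
Lemma aniso_Z (R : rcfType) (A B : seq (RXY R)) : aniso A -> aniso B ->
  aniso (R := RXYZ R) (map (@e3 R) A ++ map (fun c => varZ R * e3 c) B).
Proof. exact: aniso_frac. Qed.

Lemma e1N1 (R : rcfType) : e1 (-1 : R) = -1. Proof. by rewrite /e1 rmorphN1 rmorphN1. Qed.
Lemma e11 (R : rcfType) : e1 (1 : R) = 1. Proof. by rewrite /e1 !rmorph1. Qed.
Lemma e2N1 (R : rcfType) : e2 (-1 : RX R) = -1. Proof. by rewrite /e2 rmorphN1 rmorphN1. Qed.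
Lemma e21 (R : rcfType) : e2 (1 : RX R) = 1. Proof. by rewrite /e2 !rmorph1. Qed.
Lemma e3N1 (R : rcfType) : e3 (-1 : RXY R) = -1. Proof. by rewrite /e3 rmorphN1 rmorphN1. Qed.
Lemma e31 (R : rcfType) : e3 (1 : RXY R) = 1. Proof. by rewrite /e3 !rmorph1. Qed.
Lemma e2M (R : rcfType) (a b : RX R) : e2 (a * b) = e2 a * e2 b. Proof. by rewrite /e2 !rmorphM. Qed.
Lemma e3M (R : rcfType) (a b : RXY R) : e3 (a * b) = e3 a * e3 b. Proof. by rewrite /e3 !rmorphM. Qed.
Lemma e3X (R : rcfType) : e3 (e2 (varX1 R)) = varX R. Proof. by []. Qed.
Lemma e3Y (R : rcfType) : e3 (varY2 R) = varY R. Proof. by []. Qed.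


Lemma aniso1 (R : rcfType) (c : R) : c != 0 -> aniso [:: c].
Proof.
move=> hc [|s [|s' ss]] //= _; rewrite wsum_cons wsum0l addr0 => /eqP.
rewrite mulf_eq0 (negbTE hc) /= /sos psumr_eq0; last by move=> g _; exact: sqr_ge0.
move=> h; rewrite /zero2 /= andbT; apply: sub_all h => g /=; by rewrite sqrf_eq0.
Qed.

Lemma sos0 (R : comNzRingType) (s : seq R) : all (fun g => g == 0) s -> sos s = 0.
Proof. by move=> h; rewrite /sos big1_seq // => g /andP [_ /(allP h) /eqP ->]; rewrite expr0n. Qed.

Unset Implicit Arguments.

Theorem mainTheorem6 (R : rcfType) (s0 s1 s2 s3 s4 s5 s6 s7 : RXYZ R) :
  is_sos s0 -> is_sos s1 -> is_sos s2 -> is_sos s3 ->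
  is_sos s4 -> is_sos s5 -> is_sos s6 -> is_sos s7 ->
  s0 * (varX R * varY R) + s1 * varZ R =
    s2 + s3 * varX R + s4 * varY R + s5 * (varX R * varZ R)
    + s6 * (varY R * varZ R) + s7 * (varX R * varY R * varZ R) ->
  s0 = 0 /\ s1 = 0 /\ s2 = 0 /\ s3 = 0 /\ s4 = 0 /\ s5 = 0 /\ s6 = 0 /\ s7 = 0.
Proof.
move=> [a0 ->] [a1 ->] [a2 ->] [a3 ->] [a4 ->] [a5 ->] [a6 ->] [a7 ->] E.
have n1 : aniso [:: -1 : R] by apply: aniso1; rewrite oppr_eq0 oner_neq0.
have p1 : aniso [:: 1 : R] by apply: aniso1; rewrite oner_neq0.
have hxA := aniso_X n1 n1.
have hxB := aniso_X n1 p1.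
have hxC := aniso_X p1 n1.
have hyA := aniso_Y hxA hxB.
have hyB := aniso_Y hxC hxA.
have hz := aniso_Z hyA hyB.
have := hz [:: a2; a3; a4; a0; a1; a5; a6; a7].
rewrite ![map _ _]/= ![_ ++ _]/=.
move=> /(_ erefl).
rewrite !wsum_cons wsum0l.
move=> /(_ (general (f1 := @e1 R) (f2 := @e2 R) (f3 := @e3 R) (x1 := varX1 R) (y2 := varY2 R)
   (x := varX R) (y := varY R) (@e1N1 R) (@e11 R) (@e2N1 R) (@e21 R) (@e3N1 R) (@e31 R)
   (@e2M R) (@e3M R) (@e3X R) (@e3Y R) E)).
rewrite /zero2 /=.
move=> /andP[z2 /andP[z3 /andP[z4 /andP[z0 /andP[z1 /andP[z5 /andP[z6 /andP[z7 _]]]]]]]].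
by do !split; apply: sos0.
Qed.
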